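(* Fix a sequence of matchings, two rounds $t_1 < t_2$, and the load vector $x^{(t_1)}$ at the end of round $t_1$. For any family of non-negative numbers $g^{(s)}_{u,v}$ ($[u:v]\in \mathbf{M}^{(s)}$, $t_1 +1 \leq s \leq t_2$), let $Z := \sum_{s=t_1+1}^{t_2} \sum_{[u:v] \in \mathbf{M}^{(s)}} g_{u,v}^{(s)} e_{u,v}^{(s)}$. Then $\mathbb{E}[Z]=0$ and for any $\delta > 0$, \[ \Pr\left[ \left| Z - \mathbb{E}[Z] \right| \geq \delta \right] \leq 2 \exp \left(- \frac{ \delta^2}{2 \sum_{s=t_1+1}^{t_2} \sum_{[u:v] \in \mathbf{M}^{(s)}} \left(g^{(s)}_{u,v}\right)^2 } \right). \]
   Context: Discrete protocol with random orientation on a graph $G=(V,E)$ with $n$ nodes and matchings $\mathbf{M}^{(s)}\subseteq E$: $x^{(s)}\in\mathbb{Z}^n$ is the load vector at the end of round $s$. For each $\{u,v\}\in\mathbf{M}^{(s)}$ an independent uniform $\Phi^{(s)}_{u,v}\in\{-1,1\}$ is drawn ($\Phi^{(s)}_{v,u}=-\Phi^{(s)}_{u,v}$); both nodes receive $\lfloor (x^{(s-1)}_u+x^{(s-1)}_v)/2\rfloor$ tokens and the excess token, if the sum is odd, goes to $u$ if $\Phi^{(s)}_{u,v}=1$ and to $v$ otherwise; unmatched nodes keep their load. The rounding error is $e^{(s)}_{u,v}=\frac12\,\mathsf{Odd}(x^{(s-1)}_u+x^{(s-1)}_v)\,\Phi^{(s)}_{u,v}$, where $\mathsf{Odd}(x)=x\bmod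 2$. $[u:v]\in\mathbf{M}^{(s)}$ means $\{u,v\}\in\mathbf{M}^{(s)}$ with $u<v$. The probability is over the orientations. *)

(* Defs.v *)
From HB Require Import structures.
From mathcomp Require Import all_boot all_order all_algebra.
From mathcomp Require Import reals.
From mathcomp.analysis Require Import sequences exp.
Set Implicit Arguments. Unset Strict Implicit. Unset Printing Implicit Defensive.
Import Order.TTheory GRing.Theory Num.Theory.
Local Open Scope ring_scope.

Definition is_matching (n : nat) (m : rel 'I_n) : Prop :=
  [/\ forall u v, m u v -> m v u,
      forall u, ~~ m u u &
      forall u v w, m u v -> m u w -> v = w].

(* Orientation variables for rounds t1+1 .. t1+k : for round t1+1+i (i : 'I_k)
   and ordered pair (u,v), [om i u v = true] means Phi_{u,v} = 1 (and false
   means Phi_{u,v} = -1). Only the entries with [u:v] in the matching of that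
   round (u < v) are used; the probability space is uniform over all such
   functions, so the used entries are i.i.d. uniform signs. *)
Definition Omega (n k : nat) := {ffun 'I_k -> {ffun 'I_n -> {ffun 'I_n -> bool}}}.

(* Orientation used in the j-th round after t1 (j = 0 is round t1+1). *)
Definition orient (n k : nat) (om : Omega n k) (j : nat) : 'I_n -> 'I_n -> bool :=
  match @insub nat (fun j => j < k)%N _ j with
  | Some i => fun u v => om i u v
  | None => fun _ _ => false
  end.

Definition step (n : nat) (m : rel 'I_n) (phi : 'I_n -> 'I_n -> bool)
  (x : 'I_n -> int) : 'I_n -> int :=
  fun w =>
    match [pick v | m w v] with
    | None => x w
    | Some v =>
        let u0 := if (w < v)%N then w else v in
        let v0 := if (w < v)%N then v else w in
        let sum := x u0 + x v0 in
        (sum %/ 2)%Z +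
        (if ((sum %% 2)%Z == 1) && ((w == u0) == phi u0 v0) then 1 else 0)
    end.

(* load M t1 x0 om j = x^{(t1 + j)} : the load vector at the end of round t1+j,
   starting from x^{(t1)} = x0 and using matchings M (t1+1), M (t1+2), ... *)
Fixpoint load (n k : nat) (M : nat -> rel 'I_n) (t1 : nat) (x0 : 'I_n -> int)
  (om : Omega n k) (j : nat) : 'I_n -> int :=
  match j with
  | 0 => x0
  | j'.+1 => step (M (t1 + j)%N) (orient om j') (load M t1 x0 om j')
  end.

(* Rounding error e^{(s)}_{u,v} for s = t1 + i + 1:
   (1/2) * Odd(x^{(s-1)}_u + x^{(s-1)}_v) * Phi^{(s)}_{u,v}. *)
Definition err {R : realType} (n k : nat) (M : nat -> rel 'I_n) (t1 : nat)
  (x0 : 'I_n -> int) (om : Omega n k) (i : nat) (u v : 'I_n) : R :=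
  let x := load M t1 x0 om i in
  2^-1 * (((x u + x v) %% 2)%Z)%:~R * (if orient om i u v then 1 else -1).

Definition Zsum {R : realType} (n k : nat) (M : nat -> rel 'I_n) (t1 : nat)
  (x0 : 'I_n -> int) (g : nat -> 'I_n -> 'I_n -> R) (om : Omega n k) : R :=
  \sum_(i < k) \sum_(u : 'I_n) \sum_(v : 'I_n | (u < v)%N && M (t1 + i.+1)%N u v)
     g (t1 + i.+1)%N u v * err M t1 x0 om i u v.

Definition Pr (R : realType) (n k : nat) (A : pred (Omega n k)) : R :=
  #|[set om | A om]|%:R / #|{: Omega n k}|%:R.

Definition Exp {R : realType} (n k : nat) (X : Omega n k -> R) : R :=
  (\sum_(om : Omega n k) X om) / #|{: Omega n k}|%:R.

(* Main.v *)
Require Import Defs.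
From HB Require Import structures.
From mathcomp Require Import all_boot all_order all_algebra.
From mathcomp Require Import reals.
From mathcomp.analysis Require Import sequences exp.
From mathcomp Require Import ring lra.
Import Order.TTheory GRing.Theory Num.Theory.
Local Open Scope ring_scope.
Set Implicit Arguments. Unset Strict Implicit. Unset Printing Implicit Defensive.

Section Comb.
Variables (n k : nat).
Local Notation F := {ffun 'I_n -> {ffun 'I_n -> bool}}.

Definition upd (om : Omega n k) (i : 'I_k) (f : F) : Omega n k :=
  [ffun j => if j == i then f else om j].

Lemma orient_val (om : Omega n k) (i : 'I_k) u v : orient om i u v = om i u v.
Proof. case: i => i hi; rewrite /orient insubT /=. have e : Sub i hi = Ordinal hi :> 'I_k by apply: val_inj; rewrite SubK. by rewrite e. Qed.

Lemma orient_eq (om om' : Omega n k) j :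
  (forall i : 'I_k, nat_of_ord i = j -> om i = om' i) -> orient om j = orient om' j.
Proof.
rewrite /orient; case: insubP => [i _ hi H|//].
by rewrite H.
Qed.

Lemma load_eq M t1 x0 (om om' : Omega n k) j :
  (forall i : 'I_k, (i < j)%N -> om i = om' i) -> load M t1 x0 om j = load M t1 x0 om' j.
Proof.
elim: j => [//|j IH] H /=.
rewrite IH; last by move=> i hi; apply: H; exact: ltnW.
by rewrite (@orient_eq om om' j) // => i hi; apply: H; rewrite hi.
Qed.

Variable R : realType.

Lemma expR_ub (x : R) : `|x| <= 2^-1 -> expR x <= 1 + x + 2 * x ^+ 2.
Proof.
move=> hx.
have h1 : 1 - x <= expR (- x) by have := expR_ge1Dx (- x).
rewrite expRN in h1.
have ep := expR_gt0 x.
have h2 : (1 - x) * expR x <= 1.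
  by have := ler_wpM2r (ltW ep) h1; rewrite mulVf ?lt0r_neq0.
have : -(2^-1) <= x <= 2^-1 by rewrite -ler_norml.
move=> /andP[ha hb].
nra.
Qed.

Lemma cosh_le (x : R) : expR x + expR (- x) <= 2 * expR (2 * x ^+ 2).
Proof.
have e2 := expR_ge1Dx (2 * x ^+ 2).
case: (leP `|x| (2^-1)) => hx.
  have a := expR_ub hx.
  have b : expR (- x) <= 1 + (- x) + 2 * (- x) ^+ 2 by apply: expR_ub; rewrite normrN.
  rewrite sqrrN in b. lra.
have h1 : expR x <= expR (2 * x ^+ 2).
  rewrite ler_expR.
  have : x <= `|x| by exact: ler_norm.
  have : `|x| ^+ 2 = x ^+ 2 by rewrite real_normK ?num_real.
  nra.
have h2 : expR (- x) <= expR (2 * x ^+ 2).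
  rewrite ler_expR.
  have : - x <= `|x| by rewrite -normrN; exact: ler_norm.
  have : `|x| ^+ 2 = x ^+ 2 by rewrite real_normK ?num_real.
  nra.
lra.
Qed.

Lemma peel (h : Omega n k -> R) (i : 'I_k) (f0 : F) :
  \sum_om h om = \sum_(om : Omega n k | om i == f0) \sum_(f : F) h (upd om i f).
Proof.
pose p := fun om : Omega n k => om i.
rewrite (partition_big p xpredT) //=.
rewrite exchange_big /=; apply: eq_bigr => f _.
rewrite (reindex_onto (fun om => upd om i f) (fun om => upd om i f0)) /=; last first.
  move=> om /eqP hom; rewrite /upd; apply/ffunP => j; rewrite !ffunE.
  by case: eqP => // ->.
apply: eq_bigl => om; rewrite /p /upd ffunE eqxx eqxx /=.
apply/eqP/eqP => [<-|hom]; first by rewrite ffunE eqxx.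
apply/ffunP => j; rewrite !ffunE; case: eqP => [->|//].
by rewrite hom.
Qed.

Lemma sum_ffun2 (H : 'I_n -> 'I_n -> bool -> R) :
  \sum_(f : F) \prod_u \prod_v H u v (f u v) =
  \prod_u \prod_v (H u v true + H u v false).
Proof.
transitivity (\prod_u \sum_(h : {ffun 'I_n -> bool}) \prod_v H u v (h v)).
  by rewrite bigA_distr_bigA.
apply: eq_bigr => u _.
symmetry; rewrite (eq_bigr (fun v => \sum_(b : bool) H u v b)); last by move=> v _; rewrite big_bool.
exact: bigA_distr_bigA.
Qed.


Definition sgn (b : bool) : R := if b then 1 else -1.

Lemma card_F : #|{: F}|%:R = \prod_(u : 'I_n) \prod_(v : 'I_n) (1 + 1) :> R.
Proof.
rewrite -(sum_ffun2 (fun _ _ _ => 1)).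
transitivity (\sum_(f : F) (1:R)); last by apply: eq_bigr => f _; rewrite big1 // => u _; rewrite big1.
by rewrite sumr_const.
Qed.

Lemma sum_sgn u v : \sum_(f : F) sgn (f u v) = 0.
Proof.
pose H u' v' (b : bool) := if (u' == u) && (v' == v) then sgn b else 1.
transitivity (\sum_(f : F) \prod_u' \prod_v' H u' v' (f u' v')).
  apply: eq_bigr => f _.
  rewrite (bigD1 u) //= [X in _ * X]big1 => [|u' hu]; last by rewrite big1 // => v' _; rewrite /H (negbTE hu).
  rewrite (bigD1 v) //= [X in _ * X * _]big1 => [|v' hv]; last by rewrite /H eqxx (negbTE hv).
  by rewrite /H !eqxx !mulr1.
rewrite sum_ffun2 (bigD1 u) //= (bigD1 v) //= /H !eqxx /sgn /=.
by rewrite subrr !mul0r.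
Qed.

Lemma round_zero (P : rel 'I_n) (a : 'I_n -> 'I_n -> R) :
  \sum_(f : F) \sum_u \sum_(v | P u v) a u v * sgn (f u v) = 0.
Proof.
rewrite exchange_big; apply: big1 => u _.
rewrite exchange_big; apply: big1 => v _.
by rewrite -mulr_sumr sum_sgn mulr0.
Qed.

Lemma round_bound (P : rel 'I_n) (a : 'I_n -> 'I_n -> R) (l : R) :
  \sum_(f : F) expR (l * \sum_u \sum_(v | P u v) a u v * sgn (f u v)) <=
  #|{: F}|%:R * expR (2 * l ^+ 2 * \sum_u \sum_(v | P u v) a u v ^+ 2).
Proof.
pose H u v (b : bool) := expR (if P u v then l * (a u v * sgn b) else 0).
rewrite (eq_bigr (fun f : F => \prod_u \prod_v H u v (f u v))); last first.
  move=> f _; rewrite mulr_sumr expR_sum; apply: eq_bigr => u _.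
  rewrite mulr_sumr big_mkcond expR_sum /=; apply: eq_bigr => v _.
  by rewrite /H; case: (P u v).
rewrite sum_ffun2 card_F mulr_sumr expR_sum -big_split /=.
apply: ler_prod => u _; apply/andP; split.
  by apply: prodr_ge0 => v _; rewrite addr_ge0 // expR_ge0.
rewrite mulr_sumr [X in _ <= _ * expR X]big_mkcond expR_sum -big_split /=.
apply: ler_prod => v _; apply/andP; split; first by rewrite addr_ge0 // expR_ge0.
rewrite /H /sgn; case: (P u v); last by rewrite expR0; lra.
have := cosh_le (l * a u v).
rewrite mulr1 mulrN1 mulrN (_ : 2 * (l * a u v) ^+ 2 = 2 * l ^+ 2 * a u v ^+ 2) //.
by rewrite exprMn mulrA.
Qed.

End Comb.

Section Main.
Variables (R : realType) (n k : nat) (M : nat -> rel 'I_n) (t1 : nat)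
  (x0 : 'I_n -> int) (g : nat -> 'I_n -> 'I_n -> R).
Local Notation F := {ffun 'I_n -> {ffun 'I_n -> bool}}.

Definition Y (i : nat) (om : Omega n k) : R :=
  \sum_(u : 'I_n) \sum_(v : 'I_n | (u < v)%N && M (t1 + i.+1)%N u v)
     g (t1 + i.+1)%N u v * err M t1 x0 om i u v.

Definition G (i : nat) : R :=
  \sum_(u : 'I_n) \sum_(v : 'I_n | (u < v)%N && M (t1 + i.+1)%N u v)
     g (t1 + i.+1)%N u v ^+ 2.

Definition odd2 (om : Omega n k) (i : nat) (u v : 'I_n) : R :=
  (((load M t1 x0 om i u + load M t1 x0 om i v) %% 2)%Z)%:~R.

Lemma Y_dep (i : nat) (om om' : Omega n k) :
  (forall j : 'I_k, (j <= i)%N -> om j = om' j) -> Y i om = Y i om'.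
Proof.
move=> H; rewrite /Y /err.
rewrite (@load_eq _ _ M t1 x0 om om' i); last by move=> j hj; apply: H; exact: ltnW.
rewrite (@orient_eq _ _ om om' i) //.
by move=> j hj; apply: H; rewrite hj.
Qed.

Lemma Y_upd (i : 'I_k) (om : Omega n k) (f : F) :
  Y i (upd om i f) =
  \sum_(u : 'I_n) \sum_(v : 'I_n | (u < v)%N && M (t1 + i.+1)%N u v)
     (g (t1 + i.+1)%N u v * 2^-1 * odd2 om i u v) * sgn R (f u v).
Proof.
rewrite /Y /err /odd2.
rewrite (@load_eq _ _ M t1 x0 (upd om i f) om i); last first.
  move=> j hj; rewrite /upd ffunE; case: eqP => // e.
  by rewrite e ltnn in hj.
apply: eq_bigr => u _; apply: eq_bigr => v _.
rewrite orient_val /upd ffunE eqxx /sgn !mulrA.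
by [].
Qed.

Lemma odd2_bnd om i u v : 0 <= odd2 om i u v <= 1.
Proof.
rewrite /odd2 -[0]/(0%:~R) -[1]/(1%:~R) !ler_int.
set z := (_ + _)%R.
have h1 := @modz_ge0 z 2 isT.
have h2 := @ltz_pmod z 2 isT.
by apply/andP; split => //; rewrite -ltzD1.
Qed.

Lemma coef_le (l c o : R) : 0 <= o <= 1 ->
  2 * l ^+ 2 * (c * 2^-1 * o) ^+ 2 <= l ^+ 2 / 2 * c ^+ 2.
Proof.
move=> /andP[o0 o1].
have -> : 2 * l ^+ 2 * (c * 2^-1 * o) ^+ 2 = (l ^+ 2 / 2 * c ^+ 2) * o ^+ 2.
  by field.
apply: ler_piMr; first by apply: mulr_ge0; [apply: mulr_ge0; [exact: sqr_ge0| by rewrite invr_ge0]| exact: sqr_ge0].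
exact: exprn_ile1.
Qed.

Lemma round_Y (i : 'I_k) (om : Omega n k) (l : R) :
  \sum_(f : F) expR (l * Y i (upd om i f)) <= #|{: F}|%:R * expR (l ^+ 2 / 2 * G i).
Proof.
under eq_bigr do rewrite Y_upd.
apply: le_trans (round_bound _ _ _) _.
rewrite ler_wpM2l // ler_expR /G !mulr_sumr; apply: ler_sum => u _.
rewrite !mulr_sumr; apply: ler_sum => v _.
exact/coef_le/odd2_bnd.
Qed.


Lemma split_last (X : 'I_k -> R) m (hm : (m < k)%N) :
  \sum_(j < k | (j < m.+1)%N) X j = X (Ordinal hm) + \sum_(j < k | (j < m)%N) X j.
Proof.
rewrite (bigD1 (Ordinal hm)) //=; congr (_ + _); apply: eq_bigl => j.
rewrite -val_eqE /= ltnS.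
by case: ltngtP.
Qed.

Definition f0 : F := [ffun _ => [ffun _ => false]].

Lemma mgf (l : R) m : (m <= k)%N ->
  \sum_(om : Omega n k) expR (l * \sum_(i < k | (i < m)%N) Y i om) <=
  #|{: Omega n k}|%:R * expR (l ^+ 2 / 2 * \sum_(i < k | (i < m)%N) G i).
Proof.
elim: m => [_|m IH hm].
  rewrite [X in expR (_ * X)]big_pred0 // mulr0 expR0 mulr1.
  under eq_bigr do rewrite big_pred0 // mulr0 expR0.
  by rewrite sumr_const.
pose i := Ordinal hm.
pose A om := \sum_(j < k | (j < m)%N) Y j om.
have eqA : forall om f, A (upd om i f) = A om.
  move=> om f; apply: eq_bigr => j hj; apply: Y_dep => j' hj'.
  rewrite /upd ffunE; case: eqP => // e.
  by move: (leq_ltn_trans hj' hj); rewrite e /= ltnn.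
have key : \sum_(om : Omega n k) expR (l * A om) =
    \sum_(om : Omega n k | om i == f0) #|{: F}|%:R * expR (l * A om).
  rewrite (peel _ i f0); apply: eq_bigr => om _.
  under eq_bigr do rewrite eqA.
  by rewrite sumr_const mulr_natl.
under eq_bigr do rewrite (split_last _ hm) mulrDr expRD.
rewrite (peel _ i f0).
apply: (@le_trans _ _ ((\sum_(om : Omega n k | om i == f0) #|{: F}|%:R * expR (l * A om))
   * expR (l ^+ 2 / 2 * G i))).
  rewrite mulr_suml; apply: ler_sum => om _.
  under eq_bigr => f _ do rewrite -/(A (upd om i f)) eqA.
  rewrite -mulr_suml mulrAC ler_wpM2r ?expR_ge0 //.
  exact: round_Y.
rewrite -key.
apply: le_trans (ler_wpM2r (expR_ge0 _) (IH (ltnW hm))) _.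
by rewrite -[X in X <= _]mulrA -expRD (split_last _ hm) mulrDr addrC.
Qed.

End Main.

Section Final.
Variable R : realType.

Lemma count_le (T : finType) (P : pred T) (w : T -> R) :
  (forall x, 0 <= w x) -> (forall x, P x -> 1 <= w x) ->
  #|[set x | P x]|%:R <= \sum_x w x.
Proof.
move=> w0 w1; rewrite (bigID P) /=.
apply: ler_wpDr; first by apply: sumr_ge0.
apply: (@le_trans _ _ (\sum_(x | P x) (1 : R))); last by apply: ler_sum.
rewrite sumr_const cardsE.
by [].
Qed.

Lemma one_le_w (l d z : R) : 0 <= l -> d <= `|z| ->
  1 <= expR (l * z - l * d) + expR (- l * z - l * d).
Proof.
move=> l0; rewrite ler_normr => /orP[h|h].
  have e1 := expR_ge1Dx (l * z - l * d); have e2 := expR_ge0 (- l * z - l * d).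
  have : 0 <= l * (z - d) by apply: mulr_ge0; rewrite // subr_ge0.
  lra.
have e1 := expR_ge1Dx (- l * z - l * d); have e2 := expR_ge0 (l * z - l * d).
have : 0 <= l * (- z - d) by apply: mulr_ge0; rewrite // subr_ge0.
lra.
Qed.
End Final.

Theorem lemma2p12 (R : realType) (n : nat) (E : rel 'I_n)
  (M : nat -> rel 'I_n) (t1 t2 : nat) (x0 : 'I_n -> int)
  (g : nat -> 'I_n -> 'I_n -> R) :
  (t1 < t2)%N ->
  (forall s, is_matching (M s)) ->
  (forall s (u v : 'I_n), M s u v -> E u v) ->
  (forall s (u v : 'I_n), (t1 < s <= t2)%N -> (u < v)%N -> M s u v -> 0 <= g s u v) ->
  let Z := @Zsum R n (t2 - t1)%N M t1 x0 g in
  Exp Z = 0 /\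
  forall delta : R, 0 < delta ->
    Pr R (fun om => delta <= `|Z om - Exp Z|) <=
    2 * expR (- (delta ^+ 2 /
      (2 * \sum_(i < t2 - t1) \sum_(u : 'I_n)
             \sum_(v : 'I_n | (u < v)%N && M (t1 + i.+1)%N u v)
               g (t1 + i.+1)%N u v ^+ 2))).
Proof.
move=> _ _ _ _ Z.
set k := (t2 - t1)%N in Z *.
have hZ : forall om, Z om = \sum_(i < k | (i < k)%N) Y M t1 x0 g i om.
  by move=> om; rewrite /Z /Zsum; apply: eq_bigl => i; rewrite ltn_ord.
have hE0 : Exp Z = 0.
  rewrite /Exp (_ : \sum_(om : Omega n k) Z om = \sum_(om : Omega n k) \sum_(i < k) Y M t1 x0 g i om) //.
  rewrite exchange_big big1 ?mul0r // => i _.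
  rewrite (peel _ i (f0 n)) big1 // => om _.
  under eq_bigr do rewrite Y_upd.
  exact: round_zero.
split => // delta hd.
rewrite hE0.
rewrite (_ : \sum_(i < k) _ = \sum_(i < k) G M t1 g i) //.
set S := \sum_(i < k) G M t1 g i.
have S0 : 0 <= S.
  by apply: sumr_ge0 => i _; apply: sumr_ge0 => u _; apply: sumr_ge0 => v _; exact: sqr_ge0.
have N0 : (0 : R) < #|{: Omega n k}|%:R.
  by rewrite ltr0n; apply/card_gt0P; exists [ffun _ => f0 n].
rewrite /Pr ler_pdivrMr //.
case: (eqVneq S 0) => [->|Sn0].
  rewrite mulr0 invr0 mulr0 oppr0 expR0 mulr1.
  apply: (@le_trans _ _ #|{: Omega n k}|%:R); first by rewrite ler_nat max_card.
  lra.
have Sp : 0 < S by rewrite lt_def Sn0.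
pose l := delta / S.
have l0 : 0 <= l by rewrite /l divr_ge0 // ltW.
apply: le_trans (count_le (w := fun om => expR (l * Z om - l * delta) + expR (- l * Z om - l * delta)) _ _) _.
- by move=> om; rewrite addr_ge0 // expR_ge0.
- by move=> om /=; rewrite subr0; exact: one_le_w.
rewrite big_split /=.
under eq_bigr do rewrite expRD hZ.
under [X in _ + X <= _]eq_bigr do rewrite expRD hZ.
rewrite -!mulr_suml.
have m1 := mgf M t1 x0 g l (leqnn k).
have m2 := mgf M t1 x0 g (- l) (leqnn k).
rewrite sqrrN in m2.
have eS : \sum_(i < k | (i < k)%N) G M t1 g i = S by apply: eq_bigl => i; rewrite ltn_ord.
rewrite eS in m1 m2.
have e3 := expR_ge0 (- (l * delta)).
set N := (#|{: Omega n k}|%:R : R) in N0 m1 m2 *.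
set A1 := \sum_om _ in m1 *.
set A2 := \sum_om _ in m2 *.
have -> : - (delta ^+ 2 / (2 * S)) = l ^+ 2 / 2 * S + - (l * delta).
  by rewrite /l; field; rewrite Sn0.
rewrite expRD.
set B := expR (l ^+ 2 / 2 * S) in m1 m2 *.
set C := expR (- (l * delta)) in e3 *.
have h1 : A1 * C <= N * B * C by rewrite ler_wpM2r.
have h2 : A2 * C <= N * B * C by rewrite ler_wpM2r.
have -> : 2 * (B * C) * N = N * B * C + N * B * C by ring.
exact: lerD.
Qed.
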